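(* Let $t_1,\dots,t_d$ be positive integers with $t_i\le n_i$ for all $i$ and $t_1=t_2t_3\cdots t_d$. Then $G$ acts transitively on the set $\Lambda_{t_1\dots t_d}=\mathrm{mrank}^{-1}(t_1,\dots,t_d)$ of tensors in $V$ of multilinear rank $(t_1,\dots,t_d)$; in particular $\Lambda_{t_1\dots t_d}=G\cdot T$ with $$T=\sum_{\beta_2=1}^{t_2}\cdots\sum_{\beta_d=1}^{t_d} e_1^{\iota(\beta_2,\dots,\beta_d)}\otimes e_2^{\beta_2}\otimes\cdots\otimes e_d^{\beta_d}.$$
   Context: Fix integers $d\ge 3$ and $n_1,\dots,n_d\ge 2$. $V=\mathbb{R}^{n_1}\otimes\cdots\otimes\mathbb{R}^{n_d}$, and $G=\mathrm{GL}(n_1)\times\cdots\times\mathrm{GL}(n_d)$ acts on $V$ by $(g_1,\dots,g_d)\cdot(v_1\otimes\cdots\otimes v_d)=(g_1v_1)\otimes\cdots\otimes(g_dv_d)$, extended linearly. $e_i^1,\dots,e_i^{n_i}$ is the standard basis of $\mathbb{R}^{n_i}$. The multilinear rank of $T\in V$ is $(t_1,\dots,t_d)$ where $t_i$ is the rank of $T$ viewed as a linear map $\mathbb{R}^{n_i}\to\bigotimes_{j\ne i}\mathbb{R}^{n_j}$. $\iota:[t_2]\times\cdots\times[t_d]\to[t_1]$ is the lexicographic bijection with $\beta_2$ most significant (the ordering for which the Kronecker product satisfies $(A_2\otimes\cdots\otimes A_d)_{\iota(\beta),\iota(\gamma)}=\prod_{i}(A_i)_{\beta_i\gamma_i}$).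 *)

(* Defs.v *)
From HB Require Import structures.
From mathcomp Require Import all_boot all_order all_algebra.
From mathcomp Require Export Rstruct.
Set Implicit Arguments. Unset Strict Implicit. Unset Printing Implicit Defensive.
Import Order.TTheory GRing.Theory Num.Theory.
Local Open Scope ring_scope.

Section Tensors.
Variable (F : fieldType) (d : nat) (n : 'I_d -> nat).

Definition idx := {dffun forall k : 'I_d, 'I_(n k)}.
(* tensors in V = R^{n_1} (x) ... (x) R^{n_d}, given by their coordinates
   in the basis e_1^{j_1} (x) ... (x) e_d^{j_d} *)
Definition tensor := {ffun idx -> F}.

Definition oidx (i : 'I_d) := {dffun forall k : {k : 'I_d | k != i}, 'I_(n (val k))}.

Definition glue (i : 'I_d) (a : 'I_(n i)) (c : oidx i) : idx :=
  @finfun _ (fun k => 'I_(n k))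
    (fun k => match k =P i return 'I_(n k) with
              | ReflectT e => ecast j 'I_(n j) (esym e) a
              | ReflectF ne => c (exist _ k (introN eqP ne))
              end).

(* matrix of T viewed as a linear map R^{n_i} -> (x)_{k<>i} R^{n_k}
   (rows: basis e_i^a of R^{n_i}, columns: basis of the other factors) *)
Definition flattening (T : tensor) (i : 'I_d) : 'M[F]_(n i, #|{: oidx i}|) :=
  \matrix_(a, c) T (glue a (enum_val c)).

Definition mrank (T : tensor) (i : 'I_d) : nat := \rank (flattening T i).

(* elements of G = GL(n_1) x ... x GL(n_d) *)
Definition gtuple := forall i : 'I_d, 'M[F]_(n i).
Definition inG (g : gtuple) : Prop := forall i, g i \in unitmx.

(* (g_1,...,g_d).T : linear extension of v_1(x)..(x)v_d |-> g_1 v_1 (x)..(x) g_d v_d *)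
Definition act (g : gtuple) (T : tensor) : tensor :=
  [ffun j : idx => \sum_(k : idx) (\prod_(i < d) g i (j i) (k i)) * T k].

(* lexicographic bijection iota, beta_2 most significant (0-based indices);
   mode 1 is the ordinal with value 0 *)
Definition iota_lex (t : 'I_d -> nat) (j : idx) : nat :=
  (\sum_(k : 'I_d | (0 < val k)%N) val (j k) * \prod_(l : 'I_d | (val k < val l)%N) t l)%N.

(* T = sum_beta e_1^{iota(beta)} (x) e_2^{beta_2} (x) ... (x) e_d^{beta_d} *)
Definition Tstd (t : 'I_d -> nat) : tensor :=
  [ffun j : idx => if [forall k : 'I_d, if val k == 0%N then val (j k) == iota_lex t j
                                         else (val (j k) < t k)%N] then 1 else 0].

End Tensors.

(* Main.v *)
Require Import Defs.
From HB Require Import structures.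
From mathcomp Require Import all_boot all_order all_algebra zify.
Set Implicit Arguments. Unset Strict Implicit. Unset Printing Implicit Defensive.
Import Order.TTheory GRing.Theory Num.Theory.
Local Open Scope ring_scope.

Lemma distr_dffun (R : comNzRingType) (I : finType) (T_ : I -> finType)
  (F : forall i, T_ i -> R) :
  \sum_(k : {dffun forall i : I, T_ i}) \prod_(i : I) F i (k i) =
  \prod_(i : I) \sum_(x : T_ i) F i x.
Proof.
pose P_ := fun i => [ffun x : T_ i => F i x].
transitivity (\prod_(i : I) \sum_(x : T_ i) P_ i x); last first.
  by apply: eq_bigr => i _; apply: eq_bigr => x _; rewrite ffunE.
rewrite (eq_bigr (fun i => \sum_(j in tagged_with T_ i) untag 0 (P_ i) j)); last first.
  by move=> i _; exact: (big_tag (fun i x => P_ i x) i).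
rewrite bigA_distr_big_dep -big_fprod.
rewrite (reindex (@dffun_of_fprod I T_)); last exact/onW_bij/dffun_of_fprod_bij.
by apply: eq_bigr => t _; apply: eq_bigr => i _; rewrite !ffunE.
Qed.

Lemma matchT (P : Prop) b (r : reflect P b) (T : Type) (f : P -> T) (g : ~ P -> T)
  (p : P) (irr : forall x y : P, f x = f y) :
  match r with ReflectT e => f e | ReflectF ne => g ne end = f p.
Proof. by case: r => [e|ne]; [rewrite (irr e p) | case: ne]. Qed.

Lemma matchF (P : Prop) b (r : reflect P b) (T : Type) (f : P -> T) (g : ~ P -> T)
  (np : ~ P) (irr : forall x y : ~ P, g x = g y) :
  match r with ReflectT e => f e | ReflectF ne => g ne end = g np.
Proof. by case: r => [e|ne]; [case: np | rewrite (irr ne np)]. Qed.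

Section S.
Variables (F : fieldType) (d : nat) (n : 'I_d -> nat).

Lemma glue_i i (a : 'I_(n i)) (c : oidx n i) : glue a c i = a.
Proof.
rewrite /glue ffunE.
rewrite (@matchT _ _ (i =P i) _ (fun e => ecast j 'I_(n j) (esym e) a)
  (fun ne => c (exist _ i (introN eqP ne))) (erefl i)) //.
by move=> x y; rewrite (eq_irrelevance x y).
Qed.

Lemma glue_ne i (a : 'I_(n i)) (c : oidx n i) k (hk : k != i) :
  glue a c k = c (exist _ k hk).
Proof.
have nki : k <> i by apply/eqP.
rewrite /glue ffunE.
rewrite (@matchF _ _ (k =P i) _ (fun e => ecast j 'I_(n j) (esym e) a)
  (fun ne => c (exist _ k (introN eqP ne))) nki) /=.
  by rewrite (bool_irrelevance (introN eqP nki) hk).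
by move=> x y; rewrite (bool_irrelevance (introN eqP x) (introN eqP y)).
Qed.

Definition rest i (j : idx n) : oidx n i :=
  @finfun _ (fun k : {k : 'I_d | k != i} => 'I_(n (val k))) (fun k => j (val k)).

Lemma glueK i (j : idx n) : glue (j i) (rest i j) = j.
Proof.
apply/ffunP => k; case: (eqVneq k i) => [e|ne].
  subst k; exact: glue_i.
by rewrite (glue_ne _ _ ne) /rest ffunE.
Qed.

Lemma restK i (a : 'I_(n i)) (c : oidx n i) : rest i (glue a c) = c.
Proof. by apply/ffunP => -[k hk]; rewrite /rest ffunE /= (glue_ne _ _ hk). Qed.

Lemma sum_glue i (G : idx n -> F) :
  \sum_(k : idx n) G k = \sum_(a : 'I_(n i)) \sum_(c : oidx n i) G (glue a c).
Proof.
rewrite pair_big /=.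
rewrite (reindex (fun p : 'I_(n i) * oidx n i => glue p.1 p.2)) //.
apply: onW_bij; exists (fun j : idx n => (j i, rest i j)).
  by case=> a c /=; rewrite glue_i restK.
by move=> j /=; rewrite glueK.
Qed.


Lemma glue_indep i (a a' : 'I_(n i)) (c : oidx n i) l : l != i -> glue a c l = glue a' c l.
Proof. by move=> hl; rewrite !(glue_ne _ _ hl). Qed.

Lemma act_comp (g h : gtuple F n) (T : tensor F n) :
  act g (act h T) = act (fun i => g i *m h i) T.
Proof.
apply/ffunP => j; rewrite !ffunE.
under eq_bigr do rewrite ffunE mulr_sumr.
rewrite exchange_big /=; apply: eq_bigr => m _.
under eq_bigr do rewrite mulrA.
rewrite -mulr_suml; congr (_ * _).
under [RHS]eq_bigr do rewrite mxE.
rewrite -distr_dffun; apply: eq_bigr => k _.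
by rewrite big_split.
Qed.

Lemma act_one (T : tensor F n) : act (fun i => 1%:M) T = T.
Proof.
apply/ffunP => j; rewrite ffunE (bigD1 j) //= [X in _ + X]big1 => [|k nk].
  by rewrite big1 ?mul1r ?addr0 // => i _; rewrite mxE eqxx.
have [i hi] : exists i, j i != k i.
  case: (pickP (fun i => j i != k i)) => [i hi|H]; first by exists i.
  by exfalso; apply: (negP nk); apply/eqP/ffunP => i; move: (H i) => /negbFE/eqP.
by rewrite (bigD1 i) //= mxE (negbTE hi) mul0r mul0r.
Qed.

Definition Mflat (g : gtuple F n) i (a0 : 'I_(n i)) : 'M[F]_(#|{: oidx n i}|) :=
  \matrix_(c', c) \prod_(l | l != i) g l (glue a0 (enum_val c) l) (glue a0 (enum_val c') l).

Lemma flat_act (g : gtuple F n) (T : tensor F n) i (a0 : 'I_(n i)) :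
  flattening (act g T) i = g i *m flattening T i *m Mflat g a0.
Proof.
apply/matrixP => a c; rewrite !mxE ffunE (sum_glue i).
under [RHS]eq_bigr do rewrite mxE big_distrl /=.
rewrite exchange_big /=.
rewrite (reindex (fun c' : 'I_#|{: oidx n i}| => enum_val c')) /=; last exact/onW_bij/enum_val_bij.
apply: eq_bigr => c' _; apply: eq_bigr => b _.
rewrite (bigD1 i) //= !glue_i !mxE.
rewrite mulrAC; congr (_ * _ * _).
by apply: eq_bigr => l hl; rewrite (glue_indep a a0 _ hl) (glue_indep b a0 _ hl).
Qed.

Lemma mrank_act_le (g : gtuple F n) (T : tensor F n) i (a0 : 'I_(n i)) :
  (mrank (act g T) i <= mrank T i)%N.
Proof.
rewrite /mrank (flat_act g T a0).
apply: leq_trans (mxrankM_maxl _ _) _; exact: mxrankM_maxr.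
Qed.

Lemma act_ext (g h : gtuple F n) (T : tensor F n) : (forall i, g i = h i) -> act g T = act h T.
Proof.
move=> E; apply/ffunP => j; rewrite !ffunE; apply: eq_bigr => k _; congr (_ * _).
by apply: eq_bigr => i _; rewrite E.
Qed.

Lemma act_inv (g : gtuple F n) (T : tensor F n) : inG g ->
  act (fun i => invmx (g i)) (act g T) = T.
Proof.
move=> hg; rewrite act_comp -[RHS]act_one; apply: act_ext => i.
by rewrite mulVmx.
Qed.

Lemma mrank_act (g : gtuple F n) (T : tensor F n) i : inG g -> (0 < n i)%N ->
  mrank (act g T) i = mrank T i.
Proof.
move=> hg hp; apply/eqP; rewrite eqn_leq (mrank_act_le _ _ (Ordinal hp)) /=.
rewrite -{1}(act_inv T hg); exact: (mrank_act_le _ _ (Ordinal hp)).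
Qed.

Lemma rank_rows m p (X : 'M[F]_(m, p)) r : (r <= m)%N ->
  (forall a c, (r <= val a)%N -> X a c = 0) -> (\rank X <= r)%N.
Proof.
move=> hr H; have -> : X = (pid_mx r : 'M[F]_m) *m X.
  apply/matrixP => a c; rewrite !mxE (bigD1 a) //= big1 => [|b hb]; last first.
    by rewrite /pid_mx mxE val_eqE eq_sym (negbTE hb) mul0r.
  rewrite /pid_mx mxE eqxx /= addr0; case: ltnP => h; first by rewrite mul1r.
  by rewrite mul0r H.
by apply: leq_trans (mxrankM_maxl _ _) _; rewrite rank_pid_mx.
Qed.

Lemma rank_lb m p r (X : 'M[F]_(m, p)) (C : 'M[F]_(r, m)) (D : 'M[F]_(p, r)) :
  C *m X *m D = 1%:M -> (r <= \rank X)%N.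
Proof.
move=> E; rewrite -{1}(mxrank1 F r) -E.
apply: leq_trans (mxrankM_maxl _ _) _; exact: mxrankM_maxr.
Qed.

Lemma sum_delta_l m (x : 'I_m) (G : 'I_m -> F) : \sum_a (a == x)%:R * G a = G x.
Proof.
by rewrite (bigD1 x) //= eqxx mul1r big1 ?addr0 // => a /negbTE ->; rewrite mul0r.
Qed.

Lemma sum_delta_r (T : finType) (y : T) (G : T -> F) : \sum_c G c * (c == y)%:R = G y.
Proof.
by rewrite (bigD1 y) //= eqxx mulr1 big1 ?addr0 // => a /negbTE ->; rewrite mulr0.
Qed.

Lemma rank_lb_sel (T : tensor F n) i r (e : 'I_r -> 'I_(n i)) (cols : 'I_r -> oidx n i) :
  (forall b b', T (glue (e b) (cols b')) = (b == b')%:R) -> (r <= mrank T i)%N.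
Proof.
move=> H; apply: (@rank_lb _ _ _ _ (\matrix_(b, a) (a == e b)%:R)
   (\matrix_(c, b') (c == enum_rank (cols b'))%:R)).
apply/matrixP => b b'; rewrite !mxE.
under eq_bigr do rewrite !mxE.
rewrite sum_delta_r.
under eq_bigr do rewrite !mxE.
by rewrite sum_delta_l enum_rankK H.
Qed.

Lemma rank_ub_supp (T : tensor F n) i r : (r <= n i)%N ->
  (forall j : idx n, (r <= val (j i))%N -> T j = 0) -> (mrank T i <= r)%N.
Proof.
move=> hr H; apply: rank_rows => // a c ha; rewrite mxE; apply: H.
by rewrite glue_i.
Qed.

Lemma flat_entry (T : tensor F n) i (j : idx n) :
  flattening T i (j i) (enum_rank (rest i j)) = T j.
Proof. by rewrite mxE enum_rankK glueK. Qed.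

Lemma flat_inj (T1 T2 : tensor F n) i : flattening T1 i = flattening T2 i -> T1 = T2.
Proof. by move=> E; apply/ffunP => j; rewrite -(flat_entry T1 i) E flat_entry. Qed.

Lemma pid_row0 m p q r (Y : 'M[F]_(p, q)) (a : 'I_m) c :
  (r <= val a)%N -> ((pid_mx r : 'M[F]_(m, p)) *m Y) a c = 0.
Proof.
move=> ha; rewrite mxE big1 // => b _; rewrite /pid_mx mxE.
by rewrite (leqNgt r) in ha; rewrite (negbTE ha) andbF mul0r.
Qed.

Definition upd (g : gtuple F n) i0 (M : 'M[F]_(n i0)) : gtuple F n :=
  fun i => match i =P i0 with
           | ReflectT e => ecast k 'M[F]_(n k) (esym e) M
           | ReflectF _ => g i end.
Arguments upd g i0 M : clear implicits.

Lemma upd_eq (g : gtuple F n) i0 M : upd g i0 M i0 = M.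
Proof.
rewrite /upd (@matchT _ _ (i0 =P i0) _ (fun e => ecast k 'M[F]_(n k) (esym e) M)
  (fun _ => g i0) (erefl i0)) //.
by move=> x y; rewrite (eq_irrelevance x y).
Qed.

Lemma upd_ne (g : gtuple F n) i0 M i : i != i0 -> upd g i0 M i = g i.
Proof.
move=> /eqP ne; rewrite /upd (@matchF _ _ (i =P i0) _ (fun e => ecast k 'M[F]_(n k) (esym e) M)
  (fun _ => g i) ne) //.
Qed.

Lemma Mflat_one (g : gtuple F n) i (a0 : 'I_(n i)) :
  (forall l, l != i -> g l = 1%:M) -> Mflat g a0 = 1%:M.
Proof.
move=> H; apply/matrixP => c' c; rewrite !mxE.
case: (eqVneq c' c) => [->|ne].
  by rewrite big1 // => l hl; rewrite H // mxE eqxx.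
have ne' : enum_val c' != enum_val c.
  by apply: contra ne => /eqP E; apply/eqP; rewrite -(enum_valK c') E enum_valK.
have [[l hl] hne] : exists k, enum_val c k != enum_val c' k.
  case: (pickP (fun k => enum_val c k != enum_val c' k)) => [k hk|HH]; first by exists k.
  exfalso; apply: (negP ne'); apply/eqP/ffunP => k; move: (HH k) => /negbFE/eqP ->//.
rewrite (bigD1 l) //= H // mxE !(glue_ne _ _ hl) (negbTE hne) mul0r //.
Qed.

End S.

Section Arith.
Variables (d : nat) (t : 'I_d -> nat).
Local Open Scope nat_scope.
Hypothesis tpos : forall k, (0 < t k)%N.

Definition Qp m := (\prod_(l : 'I_d | m <= val l) t l)%N.
Definition Sf (f : 'I_d -> nat) m := (\sum_(l : 'I_d | m <= val l) f l * Qp (val l).+1)%N.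

Lemma down_ind (P : nat -> Prop) :
  (forall m, d <= m -> P m) -> (forall m (h : m < d), P m.+1 -> P m) -> forall m, P m.
Proof.
move=> Hb Hs m; move Er: (d - m) => r; elim: r m Er => [|r IH] m Er.
  by apply: Hb; rewrite -subn_eq0 Er.
have hm : m < d by rewrite -subn_gt0 Er.
apply: (Hs m hm); apply: IH; rewrite subnS Er //.
Qed.

Lemma sum_split (G : 'I_d -> nat) m (h : m < d) :
  (\sum_(l : 'I_d | m <= val l) G l = G (Ordinal h) + \sum_(l : 'I_d | m.+1 <= val l) G l)%N.
Proof.
rewrite (bigD1 (Ordinal h)) //=; congr (_ + _)%N; apply: eq_bigl => l.
by rewrite -val_eqE /= ltn_neqAle eq_sym andbC.
Qed.

Lemma prod_split (G : 'I_d -> nat) m (h : m < d) :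
  (\prod_(l : 'I_d | m <= val l) G l = G (Ordinal h) * \prod_(l : 'I_d | m.+1 <= val l) G l)%N.
Proof.
rewrite (bigD1 (Ordinal h)) //=; congr (_ * _)%N; apply: eq_bigl => l.
by rewrite -val_eqE /= ltn_neqAle eq_sym andbC.
Qed.

Lemma Qp_d m : d <= m -> Qp m = 1%N.
Proof. by move=> h; rewrite /Qp big_pred0 // => l; apply/negbTE; rewrite -ltnNge (leq_trans (ltn_ord l)). Qed.

Lemma Sf_d f m : d <= m -> Sf f m = 0%N.
Proof. by move=> h; rewrite /Sf big_pred0 // => l; apply/negbTE; rewrite -ltnNge (leq_trans (ltn_ord l)). Qed.

Lemma Qp_S m (h : m < d) : Qp m = (t (Ordinal h) * Qp m.+1)%N.
Proof. exact: prod_split. Qed.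

Lemma Sf_S f m (h : m < d) : Sf f m = (f (Ordinal h) * Qp m.+1 + Sf f m.+1)%N.
Proof. exact: sum_split. Qed.

Lemma Qp_pos m : (0 < Qp m)%N.
Proof. by rewrite /Qp prodn_gt0. Qed.

Lemma Sf_bound f m : (forall l : 'I_d, m <= val l -> f l < t l) -> Sf f m < Qp m.
Proof.
elim/down_ind: m => [m hm _|m h IH H]; first by rewrite Sf_d ?Qp_d.
rewrite (Sf_S f h) (Qp_S h).
have h1 : Sf f m.+1 < Qp m.+1 by apply: IH => l hl; apply: H; apply: ltnW.
have h2 : f (Ordinal h) < t (Ordinal h) by apply: H.
apply: (@leq_trans (f (Ordinal h) * Qp m.+1 + Qp m.+1)); first by lia.
by rewrite -mulSnr leq_mul2r h2 orbT.
Qed.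

Lemma mod_mul x a b : (0 < b)%N -> x %% (a * b) = ((x %/ b) %% a) * b + x %% b.
Proof.
move=> hb; case: (posnP a) => [->|ha]; first by rewrite mul0n !modn0 -divn_eq.
have Ex : x = (x %/ b %/ a) * (a * b) + ((x %/ b) %% a * b + x %% b).
  by rewrite addnA mulnA -mulnDl -divn_eq -divn_eq.
have hlt : (x %/ b) %% a * b + x %% b < a * b.
  have h1 := ltn_pmod (x %/ b) ha; have h2 := ltn_pmod x hb.
  apply: (@leq_trans ((x %/ b) %% a * b + b)); first by rewrite ltn_add2l.
  by rewrite -mulSnr leq_mul2r h1 orbT.
by rewrite {1}Ex modnMDl modn_small.
Qed.

Lemma Sf_decomp b m : Sf (fun l => (b %/ Qp (val l).+1) %% t l) m = b %% Qp m.
Proof.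
elim/down_ind: m => [m hm|m h IH]; first by rewrite Sf_d ?Qp_d ?modn1.
by rewrite (Sf_S _ h) IH (Qp_S h) mod_mul ?Qp_pos.
Qed.

Lemma Qp_dvd m k : m <= k -> Qp k %| Qp m.
Proof.
elim/down_ind: m => [m hm hmk|m h IH hmk].
  by rewrite (Qp_d (leq_trans hm hmk)) dvd1n.
case: (ltnP m k) => hk; last by have -> : k = m by apply/eqP; rewrite eqn_leq hk hmk.
by rewrite (Qp_S h) dvdn_mull // IH.
Qed.

Lemma Sf_dvd f m k : m <= k -> exists H, Sf f m = H * Qp k + Sf f k.
Proof.
elim/down_ind: m => [m hm hmk|m h IH hmk].
  by exists 0%N; rewrite !Sf_d // (leq_trans hm hmk).
case: (ltnP m k) => hk; last first.
  by exists 0%N; have -> : k = m by apply/eqP; rewrite eqn_leq hk hmk.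
have [H EH] := IH hk.
have [q Eq] : exists q, Qp m.+1 = q * Qp k.
  by exists (Qp m.+1 %/ Qp k); rewrite divnK // Qp_dvd.
exists (f (Ordinal h) * q + H)%N; by rewrite (Sf_S _ h) EH Eq mulnDl mulnA addnA.
Qed.

Lemma Sf_digit f (k : 'I_d) m : m <= val k ->
  (forall l : 'I_d, val k <= val l -> f l < t l) ->
  (Sf f m %/ Qp (val k).+1) %% t k = f k.
Proof.
move=> hmk H; have [Hq EH] := Sf_dvd f hmk.
rewrite EH (Qp_S (ltn_ord k)) (Sf_S f (ltn_ord k)).
have -> : Ordinal (ltn_ord k) = k by apply: val_inj.
have hb : Sf f (val k).+1 < Qp (val k).+1 by apply: Sf_bound => l hl; apply: H; apply: ltnW.
rewrite mulnA addnA -mulnDl divnMDl ?Qp_pos // divn_small // addn0.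
by rewrite modnMDl modn_small // H.
Qed.

End Arith.

Lemma Sf_ext d (t : 'I_d -> nat) f f' m :
  (forall l : 'I_d, (m <= val l)%N -> f l = f' l) -> Sf t f m = Sf t f' m.
Proof. by move=> H; apply: eq_bigr => l hl; rewrite H. Qed.

Section Std.
Variables (F : fieldType) (d : nat) (n : 'I_d -> nat) (t : 'I_d -> nat).
Hypotheses (hpos : forall l, (0 < n l)%N) (tpos : forall l, (0 < t l)%N)
  (tle : forall l, (t l <= n l)%N).
Variable i0 : 'I_d.
Hypothesis hi0 : val i0 = 0%N.
Hypothesis ht0 : t i0 = Qp t 1.

Definition box (j : idx n) : bool := [forall k : 'I_d, (val k != 0%N) ==> (val (j k) < t k)%N].
Definition jv (j : idx n) : 'I_d -> nat := fun k => val (j k).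

Lemma iotaE (j : idx n) : iota_lex t j = Sf t (jv j) 1.
Proof. by []. Qed.

Lemma neq_i0 (l : 'I_d) : (l != i0) = (val l != 0%N).
Proof. by rewrite -val_eqE hi0. Qed.

Lemma TstdE (j : idx n) :
  Tstd F n t j = if (val (j i0) == Sf t (jv j) 1) && box j then 1 else 0.
Proof.
rewrite ffunE; congr (if _ then _ else _).
apply/forallP/andP => [H|[/eqP H1 /forallP H2] k].
  split; first by have := H i0; rewrite hi0 eqxx.
  apply/forallP => k; apply/implyP => hk; have := H k; by rewrite (negbTE hk).
case: eqP => hk.
  have E : k = i0 by apply: val_inj; rewrite hk hi0.
  by subst k; rewrite H1.
exact: (implyP (H2 k) (introN eqP hk)).
Qed.

Lemma box_lt (j : idx n) (l : 'I_d) : box j -> (1 <= val l)%N -> (val (j l) < t l)%N.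
Proof. by move=> /forallP /(_ l) /implyP H hl; apply: H; rewrite -lt0n. Qed.

Lemma Tstd_supp (j : idx n) i : (t i <= val (j i))%N -> Tstd F n t j = 0.
Proof.
move=> hi; rewrite TstdE; case: andP => // -[/eqP E B]; exfalso.
case: (eqVneq i i0) => [Ei|ne].
  subst i; have : (Sf t (jv j) 1 < Qp t 1)%N.
    by apply: Sf_bound => // l hl; exact: box_lt.
  by rewrite -E -ht0 ltnNge hi.
have : (val (j i) < t i)%N by apply: box_lt => //; rewrite lt0n -neq_i0.
by rewrite ltnNge hi.
Qed.

Definition ordn l (x : nat) : 'I_(n l) := insubd (Ordinal (hpos l)) x.
Definition mkj (f : 'I_d -> nat) : idx n :=
  @finfun _ (fun l => 'I_(n l)) (fun l => ordn l (f l)).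

Lemma mkjE f l : (f l < n l)%N -> val (mkj f l) = f l.
Proof. by move=> h; rewrite /mkj ffunE /ordn val_insubd h. Qed.

Lemma mrank_std_ub i : (mrank (Tstd F n t) i <= t i)%N.
Proof. by apply: rank_ub_supp => // j hj; apply: (Tstd_supp hj). Qed.

Definition dig (b : nat) (l : 'I_d) := ((b %/ Qp t (val l).+1) %% t l)%N.

Lemma dig_lt b l : (dig b l < n l)%N.
Proof. exact: leq_trans (ltn_pmod _ (tpos l)) (tle l). Qed.

Lemma mrank_std_lb0 : (t i0 <= mrank (Tstd F n t) i0)%N.
Proof.
apply: (@rank_lb_sel _ _ _ _ _ _ (fun b => widen_ord (tle i0) b)
   (fun b' => rest i0 (mkj (dig b')))) => b b'.
set j := glue _ _.
have jl : forall l, l != i0 -> val (j l) = dig b' l.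
  by move=> l hl; rewrite /j (glue_ne _ _ hl) /rest ffunE /= mkjE // dig_lt.
have jb : box j.
  apply/forallP => l; apply/implyP; rewrite -neq_i0 => hl.
  by rewrite jl // ltn_pmod.
have jS : Sf t (jv j) 1 = b'.
  rewrite (@Sf_ext _ _ _ (dig b')); last first.
    by move=> l hl; rewrite /jv jl // neq_i0 -lt0n.
  by rewrite Sf_decomp // modn_small // -ht0.
rewrite TstdE jb jS /j glue_i /= andbT.
by rewrite -val_eqE /=; case: eqP.
Qed.

Lemma Sf_single (i : 'I_d) b : (1 <= val i)%N ->
  Sf t (fun l => if l == i then b else 0%N) 1 = (b * Qp t (val i).+1)%N.
Proof.
move=> hi; rewrite /Sf (bigD1 i) //= eqxx big1 ?addn0 // => l /andP [_ /negbTE ->].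
by rewrite mul0n.
Qed.

Lemma Wbound (i : 'I_d) b : (1 <= val i)%N -> (b < t i)%N -> (b * Qp t (val i).+1 < n i0)%N.
Proof.
move=> hi hb; apply: (@leq_trans (Qp t (val i))).
  rewrite (Qp_S t (ltn_ord i)); have -> : Ordinal (ltn_ord i) = i by apply: val_inj.
  by rewrite ltn_pmul2r ?Qp_pos.
apply: leq_trans (tle i0); rewrite ht0 dvdn_leq ?Qp_pos //; exact: Qp_dvd.
Qed.

Lemma mrank_std_lb i : i != i0 -> (t i <= mrank (Tstd F n t) i)%N.
Proof.
move=> ne; have hi : (1 <= val i)%N by rewrite lt0n -neq_i0.
pose W := Qp t (val i).+1.
apply: (@rank_lb_sel _ _ _ _ _ _ (fun b => widen_ord (tle i) b)
   (fun b' => rest i (mkj (fun l => if l == i0 then (val b' * W)%N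
                                     else if l == i then val b' else 0%N)))) => b b'.
set j := glue _ _.
have ji : val (j i) = val b by rewrite /j glue_i.
have j0 : val (j i0) = (val b' * W)%N.
  have ne' : i0 != i by rewrite eq_sym.
  rewrite /j (glue_ne _ _ ne') /rest ffunE /= mkjE eqxx //.
  exact: Wbound.
have jl : forall l, l != i0 -> l != i -> val (j l) = 0%N.
  move=> l hl hl'; rewrite /j (glue_ne _ _ hl') /rest ffunE /= mkjE (negbTE hl) (negbTE hl') //.
have jb : box j.
  apply/forallP => l; apply/implyP; rewrite -neq_i0 => hl.
  case: (eqVneq l i) => [->|hl']; first by rewrite ji ltn_ord.
  by rewrite jl.
have jS : Sf t (jv j) 1 = (val b * W)%N.
  rewrite -Sf_single //; apply: Sf_ext => l hl; rewrite /jv.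
  have hl0 : l != i0 by rewrite neq_i0 -lt0n.
  by case: (eqVneq l i) => [->|hl']; [rewrite ji | rewrite jl].
rewrite TstdE jb jS j0 andbT eqn_pmul2r ?Qp_pos //.
by rewrite -val_eqE /= eq_sym; case: eqP.
Qed.

Lemma mrank_std i : mrank (Tstd F n t) i = t i.
Proof.
apply/eqP; rewrite eqn_leq mrank_std_ub.
by case: (eqVneq i i0) => [->|ne]; [exact: mrank_std_lb0 | exact: mrank_std_lb].
Qed.

Lemma glue_box (x y : 'I_(n i0)) c : box (glue x c) = box (glue y c).
Proof.
apply: eq_forallb => l; case: (eqVneq l i0) => [->|hl]; first by rewrite hi0.
by rewrite (glue_indep x y c hl).
Qed.

Lemma glue_Sf (x y : 'I_(n i0)) c : Sf t (jv (glue x c)) 1 = Sf t (jv (glue y c)) 1.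
Proof.
apply: Sf_ext => l hl; have hl0 : l != i0 by rewrite neq_i0 -lt0n.
by rewrite /jv (glue_indep x y c hl0).
Qed.

Lemma Tstd_glue (x : 'I_(n i0)) c :
  Tstd F n t (glue x c) = if (val x == Sf t (jv (glue x c)) 1) && box (glue x c) then 1 else 0.
Proof. by rewrite TstdE glue_i. Qed.

Lemma rest_dig (x : 'I_(n i0)) (c : oidx n i0) : box (glue x c) ->
  rest i0 (mkj (dig (Sf t (jv (glue x c)) 1))) = c.
Proof.
move=> B; apply/ffunP => -[l hl]; apply: val_inj.
rewrite /rest ffunE /= mkjE ?dig_lt //.
have hl1 : (1 <= val l)%N by rewrite lt0n -neq_i0.
rewrite /dig Sf_digit //.
  by rewrite /jv (glue_ne _ _ hl).
move=> l' hl'; apply: box_lt => //; exact: leq_trans hl1 hl'.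
Qed.

Lemma normal_form (T : tensor F n) : (forall i, mrank T i = t i) ->
  exists g : gtuple F n, inG g /\ T = act g (Tstd F n t).
Proof.
move=> HT.
pose h : gtuple F n := fun i => if i == i0 then 1%:M else invmx (col_ebase (flattening T i)).
have hG : inG h.
  by move=> i; rewrite /h; case: eqP => _; [exact: unitmx1 | rewrite unitmx_inv col_ebase_unit].
pose T' := act h T.
have Z : forall (j : idx n) k, k != i0 -> (t k <= val (j k))%N -> T' j = 0.
  move=> j k hk hj.
  rewrite -(flat_entry T' k) /T' (flat_act h T (j k)).
  have Er : \rank (flattening T k) = t k := HT k.
  have -> : h k *m flattening T k = pid_mx (t k) *m row_ebase (flattening T k).
    rewrite /h (negbTE hk) -{2}(mulmx_ebase (flattening T k)) -!mulmxA mulKmx ?col_ebase_unit //.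
    by rewrite Er.
  by rewrite mxE big1 // => y _; rewrite pid_row0 ?mul0r.
have HT' : forall i, mrank T' i = t i by move=> i; rewrite mrank_act.
pose X := flattening T' i0.
pose E : 'M[F]_(n i0, t i0) := \matrix_(a, b) (val a == val b)%:R.
pose B : 'M[F]_(t i0, #|{: oidx n i0}|) :=
  \matrix_(b, c) Tstd F n t (glue (widen_ord (tle i0) b) (enum_val c)).
pose A : 'M[F]_(n i0, t i0) := \matrix_(a, b) T' (glue a (rest i0 (mkj (dig b)))).
have ES : flattening (Tstd F n t) i0 = E *m B.
  apply/matrixP => a c; rewrite !mxE.
  under eq_bigr do rewrite !mxE.
  case: (ltnP (val a) (t i0)) => ha.
    rewrite (bigD1 (Ordinal ha)) //= eqxx mul1r big1 ?addr0.
      by congr (Tstd _ _ _ (glue _ _)); apply: val_inj.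
    by move=> b hb; rewrite -val_eqE /= eq_sym in hb; rewrite (negbTE hb) mul0r.
  rewrite big1; last first.
    move=> b _; case: eqP => [e|]; last by rewrite mul0r.
    by move: (ltn_ord b); rewrite -e ltnNge ha.
  by rewrite (@Tstd_supp (glue a (enum_val c)) i0) // glue_i.
have XAB : X = A *m B.
  apply/matrixP => a c; rewrite !mxE.
  under eq_bigr do rewrite !mxE.
  set C := enum_val c.
  case Bx: (box (glue a C)).
    have hlt : (Sf t (jv (glue a C)) 1 < t i0)%N.
      by rewrite ht0; apply: Sf_bound => // l hl; apply: box_lt.
    rewrite (bigD1 (Ordinal hlt)) //= big1 ?addr0.
      rewrite Tstd_glue /= -(glue_Sf a) eqxx -(glue_box a) Bx mulr1.
      by rewrite rest_dig.
    move=> b hb; rewrite Tstd_glue /= -(glue_Sf a) -(glue_box a) Bx andbT.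
    by rewrite -val_eqE /= in hb; rewrite (negbTE hb) mulr0.
  rewrite big1; last by move=> b _; rewrite Tstd_glue -(glue_box a) Bx andbF mulr0.
  move: Bx => /negbT; rewrite negb_forall => /existsP [k]; rewrite negb_imply => /andP [hk hlt].
  by apply: (Z _ k); [rewrite neq_i0 | rewrite leqNgt].
have rA : \rank A = t i0.
  apply/eqP; rewrite eqn_leq rank_leq_col /=.
  rewrite -{1}(HT' i0) /mrank -/X XAB; exact: mxrankM_maxl.
have EtE : E^T *m E = 1%:M.
  apply/matrixP => b b'; rewrite !mxE.
  under eq_bigr do rewrite !mxE.
  rewrite (bigD1 (widen_ord (tle i0) b)) //= eqxx mul1r big1 ?addr0.
    by rewrite val_eqE.
  move=> a ha; case: (eqVneq (val a) (val b)) => e; last by rewrite mul0r.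
  by exfalso; apply: (negP ha); rewrite -val_eqE /= e.
have rE : \rank E^T = t i0.
  apply/eqP; rewrite eqn_leq rank_leq_row /=.
  by apply: (rank_lb (C:=1%:M) (D:=E)); rewrite mul1mx.
have rk : \rank (E^T *m (E *m A^T)) = \rank E^T.
  by rewrite mulmxA EtE mul1mx mxrank_tr rA rE.
have [g' ug' Eg'] := complete_unitmx rk.
have AE : A = g'^T *m E.
  by apply: trmx_inj; rewrite trmx_mul trmxK -Eg' mulmxA EtE mul1mx.
pose G := @upd F d n (fun i => 1%:M) i0 g'^T.
have GG : inG G.
  move=> i; case: (eqVneq i i0) => [->|ne]; first by rewrite /G upd_eq unitmx_tr.
  by rewrite /G upd_ne // unitmx1.
have T'E : T' = act G (Tstd F n t).
  apply: (@flat_inj _ _ _ _ _ i0); symmetry.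
  rewrite (flat_act G _ (Ordinal (hpos i0))) Mflat_one ?mulmx1; last first.
    by move=> l hl; rewrite /G upd_ne.
  by rewrite /G upd_eq ES mulmxA -AE -XAB.
exists (fun i => invmx (h i) *m G i); split.
  by move=> i; rewrite unitmx_mul unitmx_inv hG GG.
by rewrite -act_comp -T'E act_inv.
Qed.

End Std.

From mathcomp Require Import Rstruct.
From Stdlib Require Import Rdefinitions.
Local Close Scope ring_scope.
Unset Implicit Arguments.

Theorem mainTheorem7 (d : nat) (n : 'I_d -> nat) (t : 'I_d -> nat)
  (hd : (3 <= d)%N) (hn : forall i, (2 <= n i)%N)
  (ht_pos : forall i, (0 < t i)%N) (ht_le : forall i, (t i <= n i)%N)
  (ht1 : forall i : 'I_d, val i = 0%N ->
           t i = (\prod_(l : 'I_d | (0 < val l)%N) t l)%N) :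
  (forall T1 T2 : tensor Rdefinitions.R n,
      (forall i, mrank T1 i = t i) -> (forall i, mrank T2 i = t i) ->
      exists g : gtuple Rdefinitions.R n, inG g /\ act g T1 = T2) /\
  (forall T : tensor Rdefinitions.R n,
      (forall i, mrank T i = t i) <->
      exists g : gtuple Rdefinitions.R n, inG g /\ T = act g (@Tstd Rdefinitions.R d n t)).
Proof.
have hd0 : (0 < d)%N by apply: leq_trans hd.
pose i0 : 'I_d := Ordinal hd0.
have hi0 : val i0 = 0%N by [].
have hpos : forall l, (0 < n l)%N by move=> l; apply: leq_trans (hn l).
have ht0 : t i0 = Qp t 1 := ht1 i0 hi0.
have NF := @normal_form Rdefinitions.R d n t hpos ht_pos ht_le i0 hi0 ht0.
split.
  move=> T1 T2 H1 H2.
  have [g1 [u1 E1]] := NF T1 H1; have [g2 [u2 E2]] := NF T2 H2.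
  exists (fun i => mulmx (g2 i) (invmx (g1 i))); split.
    by move=> i; rewrite unitmx_mul unitmx_inv u1 u2.
  rewrite E1 E2 act_comp; apply: act_ext => i.
  by rewrite mulmxKV.
move=> T; split; first exact: NF.
move=> [g [ug ->]] i.
rewrite mrank_act //; exact: (@mrank_std _ _ n t hpos ht_pos ht_le i0 hi0 ht0).
Qed.
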